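(* Let $X=[0,1]^d$, let $Y$ be a convex subset of a finite-dimensional normed space with norm $\|\cdot\|_Y$, let $\mathcal{M}\subset X$ be a compact smooth embedded manifold, $\rho$ a probability density on $\mathcal{M}$, and $y:X\to Y$ the label function. Let $\ell:Y\times Y\to\mathbb{R}$ be strongly convex with parameter $\theta>0$, i.e. $\ell(ty_1+(1-t)y_2,y_0)+\tfrac{\theta}{2}t(1-t)\|y_1-y_2\|_Y^2\le t\ell(y_1,y_0)+(1-t)\ell(y_2,y_0)$ for all $y_0,y_1,y_2\in Y$, $t\in[0,1]$. Fix $\lambda>0$ and let $J[u]=\int_{\mathcal{M}}\ell(u(x),y(x))\rho\,dVol(x)+\lambda\,\mathrm{Lip}(u)$. If $u^\lambda\in W^{1,\infty}(X;Y)$ is a minimizer of $J$ and $u\in W^{1,\infty}(X;Y)$, then $$\frac{\theta}{2}\int_{\mathcal{M}}\|u-u^\lambda\|_Y^2\rho\,dVol(x)\le J[u]-J[u^\lambda].$$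
   Context: $W^{1,\infty}(X;Y)$ is the space of Lipschitz maps $X\to Y$; $\mathrm{Lip}(u)$ is the Lipschitz constant of $u$. *)

(* Defs.v *)
From HB Require Import structures.
From mathcomp Require Import all_boot all_order all_algebra.
From mathcomp Require Import all_classical all_reals all_analysis.
Unset Printing Implicit Defensive.
Import Order.TTheory GRing.Theory Num.Theory.
Local Open Scope classical_set_scope.
Local Open Scope ring_scope.

(* Points of R^d are d-tuples of reals (this type carries the product Borel
   sigma-algebra of mathcomp-analysis). *)

Definition edist (R : realType) (d : nat) (x x' : d.-tuple R) : R :=
  Num.sqrt (\sum_(i < d) (tnth x i - tnth x' i) ^+ 2).

Definition cube (R : realType) (d : nat) : set (d.-tuple R) :=
  [set x | forall i : 'I_d, 0 <= tnth x i <= 1].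

(* N is a norm on the finite-dimensional real vector space 'rV[R]_m.
   (Every finite-dimensional real normed space is isometric to such a space.) *)
Definition is_norm (R : realType) (m : nat) (N : 'rV[R]_m -> R) : Prop :=
  [/\ forall v, 0 <= N v,
      forall v, N v = 0 -> v = 0,
      forall (a : R) v, N (a *: v) = `|a| * N v
    & forall v w, N (v + w) <= N v + N w].

Definition convex_subset (R : realType) (m : nat) (Y : set 'rV[R]_m) : Prop :=
  forall (a b : 'rV[R]_m) (t : R), Y a -> Y b -> 0 <= t <= 1 ->
    Y (t *: a + (1 - t) *: b).

Definition euclid_compact (R : realType) (d : nat) (M : set (d.-tuple R)) : Prop :=
  (exists B : R, forall x, M x -> forall i : 'I_d, `|tnth x i| <= B) /\
  (forall x : d.-tuple R,
     (forall e : R, 0 < e -> exists2 z, M z & edist R d x z < e) -> M x).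

(* u belongs to W^{1,oo}(X;Y): u maps X into Y and is Lipschitz on X
   (Euclidean distance on X, norm N on Y). *)
Definition W1inf (R : realType) (d m : nat) (N : 'rV[R]_m -> R)
    (Y : set 'rV[R]_m) (u : d.-tuple R -> 'rV[R]_m) : Prop :=
  (forall x, cube R d x -> Y (u x)) /\
  exists L : R, forall x x', cube R d x -> cube R d x' ->
    N (u x - u x') <= L * edist R d x x'.

(* Lipschitz constant Lip(u) = sup_{x <> x' in X} N(u x - u x') / |x - x'|
   (equal to 0 when the set of quotients is empty). *)
Definition Lip (R : realType) (d m : nat) (N : 'rV[R]_m -> R)
    (u : d.-tuple R -> 'rV[R]_m) : R :=
  sup [set q : R | exists x x', [/\ cube R d x, cube R d x', x <> x'
                                  & q = N (u x - u x') / edist R d x x']].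

Definition Jfun (R : realType) (d m : nat) (N : 'rV[R]_m -> R)
    (mu : {measure set (d.-tuple R) -> \bar R}) (M : set (d.-tuple R))
    (l : 'rV[R]_m -> 'rV[R]_m -> R) (y : d.-tuple R -> 'rV[R]_m)
    (lam : R) (u : d.-tuple R -> 'rV[R]_m) : R :=
  Rintegral mu M (fun x => l (u x) (y x)) + lam * Lip R d m N u.

(* Main.v *)
Require Import Defs.
From HB Require Import structures.
From mathcomp Require Import all_boot all_order all_algebra.
From mathcomp Require Import all_classical all_reals all_analysis.
From mathcomp Require Import ring lra.
Import Order.TTheory GRing.Theory Num.Theory.
Local Open Scope classical_set_scope.
Local Open Scope ring_scope.

Lemma edist_ge0 (R : realType) d (x x' : d.-tuple R) : 0 <= Defs.edist R d x x'.
Proof. by rewrite /edist sqrtr_ge0. Qed.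
Arguments edist_ge0 {R d}.

Lemma Lip_ub (R : realType) (d m : nat) (N : 'rV[R]_m -> R) u (L : R) :
  (forall v, 0 <= N v) ->
  (forall x x', cube R d x -> cube R d x' -> N (u x - u x') <= L * Defs.edist R d x x') ->
  has_ubound [set q : R | exists x x', [/\ cube R d x, cube R d x', x <> x'
                                  & q = N (u x - u x') / Defs.edist R d x x']].
Proof.
move=> N0 hL; exists (Num.max L 0) => _ [x [x' [cx cx' _ ->]]].
have [->|ep] := eqVneq (Defs.edist R d x x') 0.
  by rewrite invr0 mulr0 le_max lexx orbT.
have {}ep : 0 < Defs.edist R d x x' by rewrite lt_neqAle eq_sym ep edist_ge0.
rewrite le_max; apply/orP; left.
by rewrite ler_pdivrMr // hL.
Qed.

Lemma Lip_convex (R : realType) (d m : nat) (N : 'rV[R]_m -> R) u w (t L1 L2 : R) :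
  is_norm R m N -> 0 <= t <= 1 ->
  (forall x x', cube R d x -> cube R d x' -> N (u x - u x') <= L1 * Defs.edist R d x x') ->
  (forall x x', cube R d x -> cube R d x' -> N (w x - w x') <= L2 * Defs.edist R d x x') ->
  Lip R d m N (fun x => t *: u x + (1 - t) *: w x) <=
    t * Lip R d m N u + (1 - t) * Lip R d m N w.
Proof.
move=> [N0 _ NZ ND] /andP[t0 t1] hu hw.
have t10 : 0 <= 1 - t by rewrite subr_ge0.
rewrite /Lip.
have [[x [x' [cx cx' nx]]]|none] := pselect (exists x x', [/\ cube R d x, cube R d x' & x <> x']).
  apply: ge_sup.
    by exists (N ((t *: u x + (1 - t) *: w x) - (t *: u x' + (1 - t) *: w x')) / Defs.edist R d x x'), x, x'.
  move=> _ [z [z' [cz cz' nz ->]]].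
  have e0 := edist_ge0 z z'.
  have eq : (t *: u z + (1 - t) *: w z) - (t *: u z' + (1 - t) *: w z')
      = t *: (u z - u z') + (1 - t) *: (w z - w z').
    by rewrite !scalerBr; rewrite opprD !addrA; congr (_ + _); rewrite -!addrA; congr (_ + _); rewrite addrC.
  rewrite eq.
  apply: (le_trans (y := t * (N (u z - u z') / Defs.edist R d z z') + (1 - t) * (N (w z - w z') / Defs.edist R d z z'))).
    rewrite !mulrA -mulrDl ler_wpM2r ?invr_ge0 //.
    apply: le_trans (ND _ _) _.
    by rewrite !NZ (ger0_norm t0) (ger0_norm t10).
  apply: lerD; apply: ler_wpM2l => //; apply: ub_le_sup.
  - exact: Lip_ub hu.
  - by exists z, z'.
  - exact: Lip_ub hw.
  - by exists z, z'.
have E : forall f : d.-tuple R -> 'rV[R]_m,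
  [set q : R | exists x x', [/\ cube R d x, cube R d x', x <> x'
                                  & q = N (f x - f x') / Defs.edist R d x x']] = set0.
  move=> f; apply/funext => q; apply/propext; split => // -[x [x' [cx cx' nx _]]].
  by apply: none; exists x, x'.
by rewrite !E sup0 !mulr0 addr0.
Qed.
Lemma Rint_mono d (T : measurableType d) (R : realType)
  (mu : {measure set T -> \bar R}) (D : set T) (h g : T -> R) :
  measurable D -> (forall x, D x -> 0 <= h x) -> (forall x, D x -> h x <= g x) ->
  mu.-integrable D (EFin \o g) ->
  Rintegral mu D h <= Rintegral mu D g.
Proof.
move=> mD h0 hg ig.
have g0 : forall x, D x -> 0 <= g x by move=> x Dx; exact: le_trans (h0 x Dx) (hg x Dx).
have le : (\int[mu]_(x in D) (h x)%:E <= \int[mu]_(x in D) (g x)%:E)%E.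
  rewrite (ge0_integralE _ (f := fun x => (h x)%:E)); last by move=> x Dx; rewrite lee_fin h0.
  rewrite (ge0_integralE _ (f := fun x => (g x)%:E)); last by move=> x Dx; rewrite lee_fin g0.
  apply: ereal_sup_le => _ [s /= sh <-]; exists s => //= x.
  apply: le_trans (sh x) _; rewrite /patch; case: ifP => // /set_mem Dx.
  by rewrite lee_fin hg.
have fg := integrable_fin_num mD ig.
have fh : (\int[mu]_(x in D) (h x)%:E)%E \is a fin_num.
  rewrite ge0_fin_numE; last by apply: integral_ge0 => x Dx; rewrite lee_fin h0.
  apply: le_lt_trans le _.
  by move: fg; rewrite fin_numE => /andP[_ /eqP]; rewrite ltey => /eqP.
by rewrite /Rintegral fine_le.
Qed.
Lemma final_step (R : realType) (A D : R) : 0 <= D ->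
  (forall t, 0 < t < 1 -> (1 - t) * A <= D) -> A <= D.
Proof.
move=> D0 H; have [//|DA] := leP A D.
have A0 : 0 < A by exact: le_lt_trans DA.
pose t := (A - D) / (2 * A).
have tA : t * A = (A - D) / 2 by rewrite /t; field; rewrite gt_eqF.
have t0 : 0 < t by rewrite /t divr_gt0 // ?subr_gt0 // mulr_gt0.
have t1 : t < 1 by rewrite /t ltr_pdivrMr ?mulr_gt0 //; lra.
have := H t; rewrite t0 t1 => /(_ isT).
rewrite mulrBl mul1r tA; lra.
Qed.

Lemma IntComb d (T : measurableType d) (R : realType)
  (mu : {measure set T -> \bar R}) (D : set T) (f1 f2 f3 : T -> R) (a b k : R) :
  measurable D ->
  mu.-integrable D (EFin \o f1) -> mu.-integrable D (EFin \o f2) ->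
  mu.-integrable D (EFin \o f3) ->
  mu.-integrable D (EFin \o (fun x => (a * f1 x + b * f2 x - f3 x) * k)) /\
  Rintegral mu D (fun x => (a * f1 x + b * f2 x - f3 x) * k) =
   (a * Rintegral mu D f1 + b * Rintegral mu D f2 - Rintegral mu D f3) * k.
Proof.
move=> mD i1 i2 i3.
have ia1 : mu.-integrable D (EFin \o (fun x => a * f1 x)).
  by apply: (eq_integrable mD _ _ _ (integrableZl mD a i1)) => x _ /=; rewrite EFinM.
have ib2 : mu.-integrable D (EFin \o (fun x => b * f2 x)).
  by apply: (eq_integrable mD _ _ _ (integrableZl mD b i2)) => x _ /=; rewrite EFinM.
have iab : mu.-integrable D (EFin \o (fun x => a * f1 x + b * f2 x)).
  by apply: (eq_integrable mD _ _ _ (integrableD mD ia1 ib2)) => x _ /=; rewrite EFinD.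
have iabc : mu.-integrable D (EFin \o (fun x => a * f1 x + b * f2 x - f3 x)).
  by apply: (eq_integrable mD _ _ _ (integrableB mD iab i3)) => x _ /=; rewrite EFinB.
split.
  by apply: (eq_integrable mD _ _ _ (integrableZl mD k iabc)) => x _ /=; rewrite EFinM muleC.
rewrite (RintegralZr _ (f := fun x => a * f1 x + b * f2 x - f3 x)) //.
rewrite (RintegralB _ (f1 := fun x => a * f1 x + b * f2 x)) //.
rewrite (RintegralD _ (f1 := fun x => a * f1 x)) //.
by rewrite (RintegralZl _ (f := f1)) // (RintegralZl _ (f := f2)).
Qed.

Lemma N_comb (R : realType) (m : nat) (N : 'rV[R]_m -> R) (t : R) (a b a' b' : 'rV[R]_m) :
  is_norm R m N -> 0 <= t <= 1 ->
  N ((t *: a + (1 - t) *: b) - (t *: a' + (1 - t) *: b'))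
    <= t * N (a - a') + (1 - t) * N (b - b').
Proof.
move=> [N0 _ NZ ND] /andP[t0 t1].
have t10 : 0 <= 1 - t by rewrite subr_ge0.
have eq : (t *: a + (1 - t) *: b) - (t *: a' + (1 - t) *: b')
      = t *: (a - a') + (1 - t) *: (b - b').
  by rewrite !scalerBr; rewrite opprD !addrA; congr (_ + _); rewrite -!addrA; congr (_ + _); rewrite addrC.
rewrite eq; apply: le_trans (ND _ _) _.
by rewrite !NZ (ger0_norm t0) (ger0_norm t10).
Qed.

Theorem mainTheorem8 (R : realType) (d m : nat)
    (N : 'rV[R]_m -> R) (Y : set 'rV[R]_m)
    (M : set (d.-tuple R)) (mu : {measure set (d.-tuple R) -> \bar R})
    (y : d.-tuple R -> 'rV[R]_m) (l : 'rV[R]_m -> 'rV[R]_m -> R)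
    (theta lam : R) (ulam u : d.-tuple R -> 'rV[R]_m) :
  is_norm R m N ->
  convex_subset R m Y ->
  measurable M -> M `<=` cube R d -> euclid_compact R d M ->
  mu M = 1%E ->
  (forall x, cube R d x -> Y (y x)) ->
  0 < theta ->
  (forall (y0 y1 y2 : 'rV[R]_m) (t : R), Y y0 -> Y y1 -> Y y2 -> 0 <= t <= 1 ->
     l (t *: y1 + (1 - t) *: y2) y0 + theta / 2 * t * (1 - t) * N (y1 - y2) ^+ 2
       <= t * l y1 y0 + (1 - t) * l y2 y0) ->
  0 < lam ->
  (forall v, W1inf R d m N Y v ->
     mu.-integrable M (fun x => (l (v x) (y x))%:E)) ->
  W1inf R d m N Y ulam ->
  (forall v, W1inf R d m N Y v ->
     Jfun R d m N mu M l y lam ulam <= Jfun R d m N mu M l y lam v) ->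
  W1inf R d m N Y u ->
  theta / 2 * Rintegral mu M (fun x => N (u x - ulam x) ^+ 2)
    <= Jfun R d m N mu M l y lam u - Jfun R d m N mu M l y lam ulam.
Proof.
move=> hN cY mM MC _ _ Yy th0 sc lam0 hint Wl hmin Wu.
have N0 : forall v, 0 <= N v by case: hN.
apply: final_step; first by rewrite subr_ge0; exact: hmin.
move=> t /andP[t0 t1].
have t01 : 0 <= t <= 1 by rewrite (ltW t0) (ltW t1).
have t10 : 0 < 1 - t by rewrite subr_gt0.
pose v := fun x => t *: u x + (1 - t) *: ulam x.
have [Yu [L1 hL1]] := Wu.
have [Yl [L2 hL2]] := Wl.
have Wv : W1inf R d m N Y v.
  split; first by move=> x cx; apply: cY => //; [exact: Yu | exact: Yl].
  exists (t * L1 + (1 - t) * L2) => x x' cx cx'.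
  apply: le_trans (@N_comb _ _ _ t _ _ _ _ hN t01) _.
  rewrite [leRHS]mulrDl -!mulrA; apply: lerD; apply: ler_wpM2l; rewrite ?(ltW t0) ?(ltW t10) //.
  - exact: hL1.
  - exact: hL2.
have hLip := @Lip_convex _ _ _ _ u ulam t _ _ hN t01 hL1 hL2.
have hm := hmin v Wv.
have iu := hint u Wu; have il := hint ulam Wl; have iv := hint v Wv.
pose c := theta / 2 * t * (1 - t).
have c0 : 0 < c by rewrite /c !mulr_gt0 // divr_gt0.
have [ig Eg] := @IntComb _ _ _ mu M _ _ _ t (1 - t) c^-1 mM iu il iv.
have hX := @Rint_mono _ _ _ mu M (fun x => N (u x - ulam x) ^+ 2) _ mM
   (fun x _ => sqr_ge0 (N (u x - ulam x))) _ ig.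
rewrite Eg in hX.
have {}hX : c * Rintegral mu M (fun x => N (u x - ulam x) ^+ 2) <=
   t * Rintegral mu M (fun x => l (u x) (y x)) + (1 - t) * Rintegral mu M (fun x => l (ulam x) (y x))
   - Rintegral mu M (fun x => l (v x) (y x)).
  rewrite mulrC -ler_pdivlMr //; apply: hX.
  move=> x Mx; rewrite ler_pdivlMr // mulrC.
  have := sc (y x) (u x) (ulam x) t (Yy _ (MC _ Mx)) (Yu _ (MC _ Mx)) (Yl _ (MC _ Mx)) t01.
  rewrite /c /v; lra.
have hL : lam * Lip R d m N v <= lam * (t * Lip R d m N u + (1 - t) * Lip R d m N ulam).
  by rewrite ler_wpM2l // ltW.
rewrite /Jfun in hm *.
rewrite -(ler_pM2l t0).
rewrite /c in hX.
nra.
Qed.
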